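(* (i) The function $\phi_{-1}^{-1}(t)=-\mathfrak{W}_0(-e^{-(t+1)})$, $t\in[0,\infty)$, is completely monotone on $[0,\infty)$. (ii) The function $\phi_{-2}^{-1}(t)=t+1-\sqrt{(t+1)^2-1}$, $t\in[0,\infty)$ (the inverse of $\phi_{-2}(x)=\tfrac12(x+x^{-1}-2)$ restricted to $x\in(0,1]$), is completely monotone on $[0,\infty)$.
   Context: $\phi_{-1}(x)=x-1-\log x$ and $\phi_{-2}(x)=\frac12(x^{-1}+x-2)$ for $x>0$; each is a strictly decreasing bijection from $(0,1]$ onto $[0,\infty)$, and $\phi_\lambda^{-1}$ denotes the inverse of this restriction. $\mathfrak{W}_0$ is the principal branch of the Lambert W function. A function $h$ on an interval $I$ is completely monotone on $I$ if it has derivatives of all orders on the interior of $I$ and $(-1)^k h^{(k)}(x)\ge0$ for all $k=0,1,2,\dots$ and all $x$ in the interior of $I$. *)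

(* Defs.v *)
From Stdlib Require Import Reals ClassicalEpsilon.
From Coquelicot Require Import Coquelicot.
Open Scope R_scope.

Definition phi_m1 (x : R) : R := x - 1 - ln x.
Definition phi_m2 (x : R) : R := / 2 * (/ x + x - 2).

Definition phi_inv (phi : R -> R) (t : R) : R :=
  epsilon (inhabits 0) (fun x => 0 < x <= 1 /\ phi x = t).

(* principal branch of Lambert W: for y >= -1/e, the unique w >= -1 with w e^w = y *)
Definition lambertW0 (y : R) : R :=
  epsilon (inhabits 0) (fun w => -1 <= w /\ w * exp w = y).

(* h is completely monotone on [a, +oo): derivatives of all orders exist on
   the interior (a, +oo) and (-1)^k h^(k)(x) >= 0 there. *)
Definition completely_monotone_from (a : R) (h : R -> R) : Prop :=
  forall (k : nat) (x : R), a < x ->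
    ex_derive_n h k x /\ 0 <= (-1) ^ k * Derive_n h k x.

(* Main.v *)
Require Import Defs.
From Stdlib Require Import Reals.
From Coquelicot Require Import Coquelicot.
From Stdlib Require Import Lra Lia List ClassicalEpsilon Ranalysis5.
Import ListNotations.
Open Scope R_scope.
Definition mon (q : nat) (m : R * nat * nat) (y : R) : R :=
  let '(c, a, b) := m in c * y ^ a * (/ (1 - y ^ S q)) ^ b.
Definition ev (q : nat) (L : list (R * nat * nat)) (y : R) : R :=
  fold_right (fun m acc => mon q m y + acc) 0 L.
Definition dmon (q : nat) (m : R * nat * nat) : list (R * nat * nat) :=
  let '(c, a, b) := m in [(c * INR a, pred a, b); (c * INR b * INR (S q), (a + q)%nat, S b)].
Definition dL (q : nat) (L : list (R * nat * nat)) := flat_map (dmon q) L.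
Definition mulM (mF : R * nat * nat) (L : list (R * nat * nat)) :=
  let '(cF, aF, bF) := mF in map (fun m => let '(c, a, b) := m in (c * cF, (a + aF)%nat, (b + bF)%nat)) L.
Definition nonneg (L : list (R * nat * nat)) := List.Forall (fun m => 0 <= fst (fst m)) L.

Lemma ev_app q L1 L2 y : ev q (L1 ++ L2) y = ev q L1 y + ev q L2 y.
Proof. induction L1 as [|m L IH]; simpl; [ring| rewrite IH; ring]. Qed.

Lemma mon_deriv q c a b y : 1 - y ^ S q <> 0 ->
  is_derive (mon q (c, a, b)) y (ev q (dmon q (c, a, b)) y).
Proof.
  intros H. unfold mon, dmon, ev; simpl.
  assert (Hq : 1 + - (y * y ^ q) <> 0) by (simpl in H; lra).
  assert (Hk : 1 * y ^ q + y * (1 * (INR q * y ^ Init.Nat.pred q)) = INR (S q) * y ^ q).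
  { destruct q as [|q']; [simpl; ring|]. cbn [pred]. rewrite !S_INR, <- tech_pow_Rmult. ring. }
  auto_derive; [exact H|]. rewrite Hk.
  change (match q with 0%nat => 1 | S _ => INR q + 1 end) with (INR (S q)).
  destruct a as [|a]; destruct b as [|b]; cbn [pred]; rewrite ?pow_add;
  try change (match a with 0%nat => 1 | S _ => INR a + 1 end) with (INR (S a));
  try change (match b with 0%nat => 1 | S _ => INR b + 1 end) with (INR (S b));
  rewrite <- ?(tech_pow_Rmult y a), <- ?(tech_pow_Rmult _ b);
  cbn [pow]; change (INR 0) with 0;
  replace (1 + - (y * y ^ q)) with (1 - y * y ^ q) by ring;
  try set (G := (/ (1 - y * y ^ q)) ^ b); field; simpl in H; auto.
Qed.

Lemma ev_deriv q L y : 1 - y ^ S q <> 0 -> is_derive (ev q L) y (ev q (dL q L) y).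
Proof.
  intros H. induction L as [|[[c a] b] L IH].
  - unfold ev; simpl. apply (is_derive_const (K:=R_AbsRing) (0:R)).
  - apply (is_derive_ext (fun y => mon q (c,a,b) y + ev q L y)); [intro; reflexivity|].
    replace (ev q (dL q ((c,a,b)::L)) y) with (ev q (dmon q (c,a,b)) y + ev q (dL q L) y)
      by (unfold dL; cbn [flat_map]; rewrite ev_app; reflexivity).
    apply (is_derive_plus (mon q (c,a,b)) (ev q L)).
    + apply mon_deriv; auto.
    + exact IH.
Qed.

Lemma ev_mul q mF L y : ev q (mulM mF L) y = mon q mF y * ev q L y.
Proof.
  destruct mF as [[cF aF] bF].
  induction L as [|[[c a] b] L IH]; simpl in *; [ring|].
  rewrite IH, !pow_add. ring.
Qed.

Lemma ev_nonneg q L y : nonneg L -> 0 < y < 1 -> 0 <= ev q L y.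
Proof.
  intros HL Hy. induction HL as [|[[c a] b] L Hm HL IH]; unfold ev in *; cbn [fold_right] in *; [lra|].
  simpl in Hm. unfold mon at 1.
  assert (0 < y ^ S q < 1).
  { split; [apply pow_lt; lra|]. apply pow_lt_1_compat; [lra| lia]. }
  assert (0 <= y ^ a) by (apply pow_le; lra).
  assert (0 <= (/ (1 - y ^ S q)) ^ b).
  { apply pow_le. left. apply Rinv_0_lt_compat. lra. }
  assert (0 <= c * y ^ a * (/ (1 - y ^ S q)) ^ b).
  { apply Rmult_le_pos; [apply Rmult_le_pos|]; auto. }
  lra.
Qed.

Lemma nonneg_dL q L : nonneg L -> nonneg (dL q L).
Proof.
  intros HL. induction HL as [|[[c a] b] L Hm HL IH]; [constructor|].
  unfold dL; cbn [flat_map]. simpl in Hm. apply Forall_app; split; [|exact IH].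
  apply Forall_cons; [|apply Forall_cons; [|apply Forall_nil]]; cbn [fst].
  - apply Rmult_le_pos; [lra| apply pos_INR].
  - apply Rmult_le_pos; [apply Rmult_le_pos; [lra| apply pos_INR]| apply pos_INR].
Qed.

Lemma nonneg_mulM cF aF bF L : 0 <= cF -> nonneg L -> nonneg (mulM (cF, aF, bF) L).
Proof.
  intros Hc HL. induction HL as [|[[c a] b] L Hm HL IH]; [constructor|].
  simpl. constructor; [simpl in *; nra| exact IH].
Qed.

Fixpoint Lk (q : nat) (mF : R * nat * nat) (k : nat) : list (R * nat * nat) :=
  match k with
  | O => [(1, 1%nat, 0%nat)]
  | S k => mulM mF (dL q (Lk q mF k))
  end.

Lemma locally_pos t : 0 < t -> locally t (fun u => 0 < u).
Proof. intros Ht. apply (open_gt 0). exact Ht. Qed.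

Lemma sq_m1 k : (-1) ^ k * (-1) ^ k = 1.
Proof. induction k; simpl; [ring|]. nra. Qed.

Lemma cm_gen q cF aF bF (y : R -> R) : 0 <= cF ->
  (forall t, 0 < t -> 0 < y t < 1) ->
  (forall t, 0 < t -> is_derive y t (- mon q (cF, aF, bF) (y t))) ->
  forall k t, 0 < t -> ex_derive_n y k t /\
    Derive_n y k t = (-1) ^ k * ev q (Lk q (cF, aF, bF) k) (y t).
Proof.
  intros Hc Hy Hd k. induction k as [|k IH]; intros t Ht.
  - split; [exact I|]. simpl. unfold mon. ring.
  - assert (Hloc : locally t (fun u => (fun u => (-1) ^ k * ev q (Lk q (cF, aF, bF) k) (y u)) u = Derive_n y k u)).
    { generalize (locally_pos t Ht). apply filter_imp. intros u Hu. symmetry. apply IH. exact Hu. }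
    assert (HD : is_derive (fun u => (-1) ^ k * ev q (Lk q (cF, aF, bF) k) (y u)) t
                   ((-1) ^ k * (- mon q (cF, aF, bF) (y t) * ev q (dL q (Lk q (cF, aF, bF) k)) (y t)))).
    { apply is_derive_scal.
      apply (is_derive_comp (ev q (Lk q (cF, aF, bF) k)) y).
      - apply ev_deriv. destruct (Hy t Ht).
        assert (0 <= y t ^ S q < 1) by (apply pow_lt_1_compat; [lra|lia]). lra.
      - apply Hd; exact Ht. }
    split.
    + simpl. apply (ex_derive_ext_loc _ _ t Hloc). eexists; exact HD.
    + change (Derive (Derive_n y k) t = (-1)^(S k) * ev q (Lk q (cF,aF,bF) (S k)) (y t)).
      rewrite <- (Derive_ext_loc _ _ t Hloc). match goal with |- Derive ?f t = _ => replace (Derive f t) with ((-1) ^ k * (- mon q (cF, aF, bF) (y t) * ev q (dL q (Lk q (cF, aF, bF) k)) (y t))) by (symmetry; apply is_derive_unique; exact HD) end.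
      cbn [Lk]. rewrite ev_mul. simpl pow. ring.
Qed.

Lemma cm_gen2 q cF aF bF (y : R -> R) : 0 <= cF ->
  (forall t, 0 < t -> 0 < y t < 1) ->
  (forall t, 0 < t -> is_derive y t (- mon q (cF, aF, bF) (y t))) ->
  forall k t, 0 < t -> ex_derive_n y k t /\ 0 <= (-1) ^ k * Derive_n y k t.
Proof.
  intros Hc Hy Hd k t Ht. destruct (cm_gen q cF aF bF y Hc Hy Hd k t Ht) as [H1 H2].
  split; [exact H1|]. rewrite H2, <- Rmult_assoc, sq_m1, Rmult_1_l.
  apply ev_nonneg; [| apply Hy; exact Ht].
  clear H1 H2. induction k; simpl.
  - apply Forall_cons; [simpl; lra| apply Forall_nil].
  - apply nonneg_mulM; [exact Hc|]. apply nonneg_dL. exact IHk.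
Qed.
Definition Y2 (t : R) := t + 1 - sqrt ((t + 1) ^ 2 - 1).

Lemma Y2_facts t : 0 <= t ->
  let r := sqrt ((t + 1) ^ 2 - 1) in 0 <= r /\ r * r = (t + 1) ^ 2 - 1.
Proof.
  intros Ht r. split; [apply sqrt_pos|]. apply sqrt_sqrt. nra.
Qed.

Lemma Y2_spec t : 0 <= t -> 0 < Y2 t <= 1 /\ phi_m2 (Y2 t) = t.
Proof.
  intros Ht. destruct (Y2_facts t Ht) as [Hr Hrr]. unfold Y2.
  set (r := sqrt ((t + 1) ^ 2 - 1)) in *.
  assert (r < t + 1) by nra.
  assert (t <= r) by nra.
  split; [lra|]. unfold phi_m2.
  assert (E : / (t + 1 - r) = t + 1 + r).
  { field_simplify_eq; [|lra]. simpl in Hrr. nra. }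
  rewrite E. field.
Qed.

Lemma phi_m2_inj x z : 0 < x <= 1 -> 0 < z <= 1 -> phi_m2 x = phi_m2 z -> x = z.
Proof.
  intros Hx Hz H. unfold phi_m2 in H.
  assert (H2 : / x + x = / z + z) by lra.
  assert (H3 : (x - z) * (x * z - 1) = 0).
  { apply (f_equal (fun u => u * (x * z))) in H2. field_simplify in H2; try lra.
  }
  apply Rmult_integral in H3. destruct H3; [lra|]. nra.
Qed.

Lemma phi_inv2_eq t : 0 <= t -> phi_inv phi_m2 t = Y2 t.
Proof.
  intros Ht. unfold phi_inv.
  destruct (epsilon_spec (inhabits 0) (fun x => 0 < x <= 1 /\ phi_m2 x = t)) as [H1 H2].
  { exists (Y2 t). apply Y2_spec, Ht. }
  destruct (Y2_spec t Ht) as [H3 H4].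
  apply phi_m2_inj; auto. congruence.
Qed.

Lemma Y2_lt1 t : 0 < t -> Y2 t < 1.
Proof.
  intros Ht. destruct (Y2_facts t (Rlt_le _ _ Ht)) as [Hr Hrr]. unfold Y2.
  set (r := sqrt ((t + 1) ^ 2 - 1)) in *. nra.
Qed.

Lemma Y2_deriv t : 0 < t -> is_derive Y2 t (- mon 1 (2, 2%nat, 1%nat) (Y2 t)).
Proof.
  intros Ht. destruct (Y2_facts t (Rlt_le _ _ Ht)) as [Hr Hrr].
  assert (Hpos : 0 < (t + 1) ^ 2 - 1) by nra.
  assert (Hr' : 0 < sqrt ((t + 1) ^ 2 - 1)) by (apply sqrt_lt_R0; exact Hpos).
  unfold Y2. auto_derive; [exact Hpos|].
  unfold mon.
  set (r := sqrt ((t + 1) ^ 2 - 1)) in *.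
  assert (E : 1 - (t + 1 - r) ^ S 1 = 2 * r * (t + 1 - r)) by (simpl in *; nra).
  rewrite E. assert (t + 1 - r > 0) by nra. replace (sqrt ((t + 1) * ((t + 1) * 1) + - (1))) with r by (unfold r; f_equal; ring). field. lra.
Qed.
Lemma ln_lt_m1 u : 0 < u -> u <> 1 -> ln u < u - 1.
Proof.
  intros Hu H1. assert (ln u <> 0).
  { intro E. apply H1. rewrite <- (exp_ln u Hu), E. apply exp_0. }
  generalize (exp_ineq1 (ln u) H). rewrite exp_ln by exact Hu. lra.
Qed.

Lemma P_decr a b : 0 < a -> a < b -> b <= 1 -> phi_m1 b < phi_m1 a.
Proof.
  intros Ha Hab Hb. unfold phi_m1.
  assert (Hl : ln (a / b) < a / b - 1).
  { apply ln_lt_m1. apply Rdiv_lt_0_compat; lra.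
    intro E. assert (a = b) by (apply (f_equal (fun z => z * b)) in E; field_simplify in E; lra). lra. }
  rewrite ln_div in Hl by lra.
  assert (a / b - 1 <= a - b).
  { assert (a / b - 1 = (a - b) / b) by (field; lra). rewrite H.
    apply (Rmult_le_reg_r b); [lra|]. field_simplify; [|lra]. nra. }
  lra.
Qed.

Lemma P_cont z : 0 < z -> continuity_pt phi_m1 z.
Proof.
  intros Hz. apply continuity_pt_filterlim. apply (ex_derive_continuous phi_m1).
  unfold phi_m1. auto_derive. exact Hz.
Qed.

Lemma P_derive z : 0 < z -> derivable_pt_lim (fun x => - phi_m1 x) z (1 / z - 1).
Proof.
  intros Hz. apply is_derive_Reals. unfold phi_m1. auto_derive; [exact Hz|]. field. lra.
Qed.

Lemma P_exists t : 0 <= t -> exists x, 0 < x <= 1 /\ phi_m1 x = t.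
Proof.
  intros Ht. destruct (Req_dec t 0) as [E|Hne].
  - exists 1. split; [lra|]. unfold phi_m1. rewrite ln_1. lra.
  - set (a := exp (- (t + 1))).
    assert (Ha : 0 < a) by apply exp_pos.
    assert (Ha1 : a < 1).
    { unfold a. apply (Rlt_le_trans _ (exp 0)); [apply exp_increasing; lra | rewrite exp_0; lra]. }
    assert (Pa : phi_m1 a = t + a) by (unfold phi_m1, a; rewrite ln_exp; ring).
    destruct (IVT_interv (fun x => t - phi_m1 x) a 1) as [z [Hz1 Hz2]].
    + intros z Hz. apply continuity_pt_minus; [apply continuity_pt_const; intros ? ?; reflexivity|].
      apply P_cont. lra.
    + exact Ha1.
    + rewrite Pa. lra.
    + unfold phi_m1. rewrite ln_1. lra.
    + exists z. split; lra.
Qed.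

Lemma P_inj x z : 0 < x <= 1 -> 0 < z <= 1 -> phi_m1 x = phi_m1 z -> x = z.
Proof.
  intros Hx Hz H. destruct (Rtotal_order x z) as [L|[E|L]]; auto.
  - generalize (P_decr x z ltac:(lra) L ltac:(lra)). lra.
  - generalize (P_decr z x ltac:(lra) L ltac:(lra)). lra.
Qed.

Definition Y1 := phi_inv phi_m1.

Lemma Y1_spec t : 0 <= t -> 0 < Y1 t <= 1 /\ phi_m1 (Y1 t) = t.
Proof.
  intros Ht. unfold Y1, phi_inv.
  apply (epsilon_spec (inhabits 0) (fun x => 0 < x <= 1 /\ phi_m1 x = t)).
  apply P_exists, Ht.
Qed.

Lemma Y1_uniq t x : 0 < x <= 1 -> phi_m1 x = t -> Y1 t = x.
Proof.
  intros Hx E. assert (Ht : 0 <= t).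
  { subst t. destruct (Req_dec x 1) as [->|Hne].
    - unfold phi_m1; rewrite ln_1; lra.
    - left. replace 0 with (phi_m1 1) by (unfold phi_m1; rewrite ln_1; ring).
      apply P_decr; lra. }
  destruct (Y1_spec t Ht). apply P_inj; auto. congruence.
Qed.

Lemma Y1_lt1 t : 0 < t -> Y1 t < 1.
Proof.
  intros Ht. destruct (Y1_spec t (Rlt_le _ _ Ht)) as [[H1 H2] H3].
  destruct H2 as [H2|H2]; auto. rewrite H2 in H3. unfold phi_m1 in H3. rewrite ln_1 in H3. lra.
Qed.

Lemma Y1_ge t a : 0 < a <= 1 -> 0 <= t <= phi_m1 a -> a <= Y1 t.
Proof.
  intros Ha Ht. destruct (Y1_spec t ltac:(lra)) as [H1 H2].
  destruct (Rle_lt_dec a (Y1 t)) as [|L]; auto.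
  generalize (P_decr (Y1 t) a ltac:(lra) L ltac:(lra)). lra.
Qed.

Lemma lambert_eq t : 0 <= t -> Y1 t = - lambertW0 (- exp (- (t + 1))).
Proof.
  intros Ht. unfold lambertW0.
  destruct (epsilon_spec (inhabits 0) (fun w => -1 <= w /\ w * exp w = - exp (- (t + 1)))) as [H1 H2].
  { exists (- Y1 t). destruct (Y1_spec t Ht) as [Hy Hp]. split; [lra|].
    unfold phi_m1 in Hp.
    replace (- exp (- (t + 1))) with (- exp (ln (Y1 t) + - Y1 t)) by (f_equal; f_equal; lra).
    rewrite exp_plus, exp_ln by lra. ring. }
  set (w := epsilon _ _) in *.
  assert (Hw : w < 0).
  { destruct (Rlt_le_dec w 0) as [|L]; auto.
    assert (0 <= w * exp w) by (apply Rmult_le_pos; [lra| left; apply exp_pos]).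
    generalize (exp_pos (- (t + 1))). lra. }
  assert (E : phi_m1 (- w) = t).
  { assert (E2 : (- w) * exp (- (- w)) = exp (- (t + 1))) by (rewrite Ropp_involutive; lra).
    apply (f_equal ln) in E2. rewrite ln_mult in E2 by (try lra; apply exp_pos).
    rewrite !ln_exp in E2. unfold phi_m1. lra. }
  rewrite (Y1_uniq t (- w)); [ring | lra | exact E].
Qed.

Lemma Y1_deriv t0 : 0 < t0 -> is_derive Y1 t0 (- mon 0 (1, 1%nat, 1%nat) (Y1 t0)).
Proof.
  intros Ht0.
  set (a := exp (- (t0 + 1))).
  assert (Ha : 0 < a) by apply exp_pos.
  assert (Ha1 : a < 1).
  { unfold a. apply (Rlt_le_trans _ (exp 0)); [apply exp_increasing; lra | rewrite exp_0; lra]. }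
  assert (Pa : phi_m1 a = t0 + a) by (unfold phi_m1, a; rewrite ln_exp; ring).
  set (T := phi_m1 a) in *.
  set (f := fun x => - phi_m1 x).
  set (g := fun u => Y1 (- u)).
  assert (gT : g (- T) = a).
  { unfold g. rewrite Ropp_involutive. apply Y1_uniq; [lra| reflexivity]. }
  assert (g0 : g 0 = 1).
  { unfold g. rewrite Ropp_0. apply Y1_uniq; [lra|]. unfold phi_m1; rewrite ln_1; ring. }
  assert (Hcomp : forall u, - T <= u <= 0 -> comp f g u = id u).
  { intros u Hu. unfold comp, f, g, id. destruct (Y1_spec (- u) ltac:(lra)) as [_ E].
    rewrite E. ring. }
  assert (Hrange : forall u, - T <= u <= 0 -> a <= g u <= 1).
  { intros u Hu. unfold g. split.
    - apply Y1_ge; [lra| unfold T in Hu; lra].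
    - apply (Y1_spec (- u) ltac:(lra)). }
  assert (Hcont : continuity_pt g (- t0)).
  { apply (continuity_pt_recip_interv f g a 1 Ha1).
    - intros x y Hx Hxy Hy. unfold f. apply Ropp_lt_contravar. apply P_decr; lra.
    - intros x Hx1 Hx2. apply Hcomp. unfold f in *. fold T in Hx1.
      unfold phi_m1 in Hx2 at 1. rewrite ln_1 in Hx2. lra.
    - intros x Hx1 Hx2. apply Hrange. unfold f in *. fold T in Hx1.
      unfold phi_m1 in Hx2 at 1. rewrite ln_1 in Hx2. lra.
    - intros z Hz. unfold f. apply continuity_pt_opp. apply P_cont. lra.
    - unfold f. fold T. replace (phi_m1 1) with 0 by (unfold phi_m1; rewrite ln_1; ring). lra. }
  assert (Prf : forall z, g (- T) <= z <= g 0 -> derivable_pt f z).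
  { intros z Hz. rewrite gT in Hz. exists (1 / z - 1). apply P_derive. lra. }
  assert (Hgx : g (- T) <= g (- t0) <= g 0).
  { rewrite gT, g0. apply Hrange. lra. }
  assert (Hy0 := Y1_spec t0 (Rlt_le _ _ Ht0)).
  assert (Hy1 := Y1_lt1 t0 Ht0).
  assert (Egt : g (- t0) = Y1 t0) by (unfold g; rewrite Ropp_involutive; reflexivity).
  assert (Hder : derive_pt f (g (- t0)) (Prf (g (- t0)) Hgx) = 1 / Y1 t0 - 1).
  { apply derive_pt_eq_0. rewrite Egt. apply P_derive. lra. }
  assert (HL := derivable_pt_lim_recip_interv f g (- T) 0 (- t0) Prf Hcont
                  ltac:(lra) ltac:(lra) Hgx Hcomp).
  rewrite Hder in HL. specialize (HL ltac:(intro E; assert (Y1 t0 = 1) by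
      (apply (f_equal (fun z => z * Y1 t0)) in E; field_simplify in E; lra); lra)).
  apply is_derive_Reals in HL.
  apply (is_derive_ext (fun t => g (- t))).
  { intro t. unfold g. rewrite Ropp_involutive. reflexivity. }
  assert (HO : is_derive (fun t : R => - t) t0 (-1)) by (auto_derive; [exact I| ring]).
  generalize (is_derive_comp g (fun t => - t) t0 _ _ HL HO).
  intro H.
  replace (- mon 0 (1, 1%nat, 1%nat) (Y1 t0)) with (scal (-1) (1 / (1 / Y1 t0 - 1))).
  { exact H. }
  unfold mon, scal; simpl; unfold mult; simpl.
  destruct Hy0 as [[Hp _] _].
  field. split; lra.
Qed.

Theorem lemma4 :
  ((forall t : R, 0 <= t -> phi_inv phi_m1 t = - lambertW0 (- exp (- (t + 1)))) /\
   completely_monotone_from 0 (phi_inv phi_m1)) /\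
  ((forall t : R, 0 <= t -> phi_inv phi_m2 t = t + 1 - sqrt ((t + 1) ^ 2 - 1)) /\
   completely_monotone_from 0 (phi_inv phi_m2)).
Proof.
  split; split.
  - exact lambert_eq.
  - intros k x Hx. apply (cm_gen2 0 1 1 1 Y1); [lra| | |exact Hx].
    + intros t Ht. split; [apply (Y1_spec t (Rlt_le _ _ Ht))| apply Y1_lt1, Ht].
    + exact Y1_deriv.
  - exact phi_inv2_eq.
  - intros k x Hx. apply (cm_gen2 1 2 2 1 (phi_inv phi_m2)); [lra| | |exact Hx].
    + intros t Ht. rewrite phi_inv2_eq by lra.
      split; [apply (Y2_spec t (Rlt_le _ _ Ht))| apply Y2_lt1, Ht].
    + intros t Ht. rewrite phi_inv2_eq by lra.
      apply (is_derive_ext_loc Y2).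
      * generalize (locally_pos t Ht). apply filter_imp. intros u Hu.
        symmetry. apply phi_inv2_eq. lra.
      * apply Y2_deriv, Ht.
Qed.
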